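(* Let $N\ge1$, $d\ge1$, $\varepsilon>0$, $(c_\ell)_{-N\le\ell\le N}\in\mathbb{C}^{2N+1}$, $\alpha,\beta\in\mathbb{C}^d$, and let $\mathcal L(t,\mathbf x,\dot{\mathbf x})$ be a lagrangian, continuous in $t\in[a,b]$ and continuously complex-differentiable in $(\mathbf x,\dot{\mathbf x})\in\mathbb{C}^d\times\mathbb{C}^d$. Let $\mathbf x\in\mathcal C_{pw}(d,N,\alpha,\beta)$ be a critical point of the discrete action \[ \mathcal A_{disc}(\mathbf x)=\int_a^b\mathcal L(t,\mathbf x(t),\Box_\varepsilon\mathbf x(t))\,dt, \] i.e. $\frac{d}{d\eta}\big|_{\eta=0}\mathcal A_{disc}(\mathbf x+\eta\mathbf h)=0$ for every $\mathbf h\in\mathcal C_{pw}(d,N,0,0)$. Then for every $j\in\{1,\dots,d\}$, \[ \Box_{-\varepsilon}\Big[\frac{\partial\mathcal L}{\partial\dot x_j}(\cdot,\mathbf x(\cdot),\Box_\varepsilon\mathbf x(\cdot))\Big](t)+\frac{\partial\mathcal L}{\partial x_j}(t,\mathbf x(t),\Box_\varepsilon\mathbf x(t))=0 \] for (almost) every $t\in[a,b]$; explicitly, $\sum_{\ell=-N}^{N}c_\ell\,\chi_\ell(t)\,\frac{\partial\mathcal L}{\partial\dot x_j}\big(t-\ell\varepsilon,\mathbf x(t-\ell\varepsilon),\Box_\varepsilon\mathbf x(t-\ell\varepsilon)\big)+\frac{\partial\mathcal L}{\partial x_j}(t,\mathbf x(t),\Box_\varepsilon\mathbf x(t))=0$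.
   Context: Fix $[a,b]$ and $\varepsilon>0$. For each integer $\ell$, $\chi_\ell$ is the indicator function of $[\max(a,a+\ell\varepsilon),\min(b,b+\ell\varepsilon)]$; a term multiplied by a vanishing $\chi_\ell$ is taken to be $0$. For $\alpha,\beta\in\mathbb{C}^d$, $\mathcal C_{pw}(d,N,\alpha,\beta)$ is the set of functions $\mathbf x:[a,b]\to\mathbb{C}^d$ with $\mathbf x(a)=\alpha$, $\mathbf x(b)=\beta$, continuous on each interval $[a+\ell\varepsilon,a+(\ell+1)\varepsilon]\cap[a,b]$, $\ell\in\mathbb{Z}$ (with the topology of uniform convergence). Given coefficients $(c_\ell)_{-N\le \ell\le N}$, the generalized scale derivative is \[ \Box_\varepsilon\mathbf x(t)=\sum_{\ell=-N}^{N}c_\ell\,\mathbf x(t+\ell\varepsilon)\chi_{-\ell}(t),\qquad t\in[a,b], \] acting componentwise, and $\Box_{-\varepsilon}$ denotes the operator obtained by replacing $\varepsilon$ with $-\varepsilon$ while keeping the same coefficients $c_\ell$: \[ \Box_{-\varepsilon}\mathbf f(t)=\sum_{\ell=-N}^{N}c_\ell\,\mathbf f(t-\ell\varepsilon)\chi_{\ell}(t). \] *)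

(* Defs.v *)
From Stdlib Require Import Reals ZArith.
From mathcomp Require Import ssreflect ssrfun ssrbool eqtype ssrnat seq fintype.

Set Implicit Arguments.
Unset Strict Implicit.

Local Open Scope R_scope.

Definition Cx : Type := (R * R)%type.
Definition C0 : Cx := (0, 0).
Definition C1 : Cx := (1, 0).
Definition RtoC (r : R) : Cx := (r, 0).
Definition Cadd (z w : Cx) : Cx := (fst z + fst w, snd z + snd w).
Definition Copp (z : Cx) : Cx := (- fst z, - snd z).
Definition Csub (z w : Cx) : Cx := Cadd z (Copp w).
Definition Cmul (z w : Cx) : Cx :=
  (fst z * fst w - snd z * snd w, fst z * snd w + snd z * fst w).
Definition Cmod (z : Cx) : R := sqrt (fst z * fst z + snd z * snd z).

Definition Cvec (d : nat) : Type := 'I_d -> Cx.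

Definition sumI (d : nat) (f : 'I_d -> Cx) : Cx :=
  foldr (fun i acc => Cadd (f i) acc) C0 (enum 'I_d).

Definition sumIR (d : nat) (f : 'I_d -> R) : R :=
  foldr (fun i acc => f i + acc) 0 (enum 'I_d).

Definition Vnorm (d : nat) (v : Cvec d) : R := sumIR (fun j => Cmod (v j)).

Definition Vadd (d : nat) (v w : Cvec d) : Cvec d := fun j => Cadd (v j) (w j).
Definition Vsub (d : nat) (v w : Cvec d) : Cvec d := fun j => Csub (v j) (w j).

Definition sumZ (N : nat) (f : Z -> Cx) : Cx :=
  foldr (fun k acc => Cadd (f (Z.of_nat k - Z.of_nat N)%Z) acc) C0
        (iota 0 (2 * N).+1).

Definition chi (a b eps : R) (l : Z) (t : R) : Cx :=
  if Rle_dec (Rmax a (a + IZR l * eps)) t then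
    if Rle_dec t (Rmin b (b + IZR l * eps)) then C1 else C0
  else C0.

Definition Box (a b eps : R) (N : nat) (c : Z -> Cx) (d : nat)
  (x : R -> Cvec d) (t : R) : Cvec d :=
  fun j => sumZ N (fun l =>
    Cmul (c l) (Cmul (x (t + IZR l * eps) j) (chi a b eps (- l) t))).

Definition Box_minus (a b eps : R) (N : nat) (c : Z -> Cx)
  (f : R -> Cx) (t : R) : Cx :=
  sumZ N (fun l => Cmul (c l) (Cmul (f (t - IZR l * eps)) (chi a b eps l t))).

Definition continuous_on_set (I : R -> Prop) (f : R -> Cx) : Prop :=
  forall t, I t -> forall e, 0 < e -> exists delta, 0 < delta /\
    forall s, I s -> Rabs (s - t) < delta -> Cmod (Csub (f s) (f t)) < e.

Definition Cpw (a b eps : R) (d : nat) (alpha beta : Cvec d)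
  (x : R -> Cvec d) : Prop :=
  x a = alpha /\ x b = beta /\
  forall (l : Z) (j : 'I_d),
    continuous_on_set
      (fun t => a + IZR l * eps <= t <= a + (IZR l + 1) * eps /\ a <= t <= b)
      (fun t => x t j).

Definition is_RInt_C (f : R -> Cx) (a b : R) (I : Cx) : Prop :=
  (exists pr : Riemann_integrable (fun t => fst (f t)) a b,
      RiemannInt pr = fst I) /\
  (exists pr : Riemann_integrable (fun t => snd (f t)) a b,
      RiemannInt pr = snd I).

Definition jointly_continuous (a b : R) (d : nat)
  (F : R -> Cvec d -> Cvec d -> Cx) : Prop :=
  forall t x v, a <= t <= b -> forall e, 0 < e -> exists delta, 0 < delta /\
    forall s y w, a <= s <= b ->
      Rabs (s - t) + Vnorm (Vsub y x) + Vnorm (Vsub w v) < delta ->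
      Cmod (Csub (F s y w) (F t x v)) < e.

Definition complex_partials (a b : R) (d : nat)
  (L : R -> Cvec d -> Cvec d -> Cx)
  (Lx Lv : 'I_d -> R -> Cvec d -> Cvec d -> Cx) : Prop :=
  forall t x v, a <= t <= b -> forall e, 0 < e -> exists delta, 0 < delta /\
    forall h k : Cvec d, Vnorm h + Vnorm k < delta ->
      Cmod (Csub (Csub (L t (Vadd x h) (Vadd v k)) (L t x v))
                 (sumI (fun j => Cadd (Cmul (Lx j t x v) (h j))
                                      (Cmul (Lv j t x v) (k j)))))
      <= e * (Vnorm h + Vnorm k).

Definition negligible (S : R -> Prop) : Prop :=
  forall e, 0 < e -> exists u v : nat -> R,
    (forall n, u n <= v n) /\
    (forall t, S t -> exists n, u n < t < v n) /\
    (forall n, sum_f_R0 (fun k => v k - u k) n <= e).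

(* Main.v *)
Require Import Defs.
From Stdlib Require Import Reals ZArith Lra Lia FunctionalExtensionality Classical.
From Coquelicot Require Import Coquelicot.
From mathcomp Require Import ssreflect ssrfun ssrbool eqtype ssrnat seq fintype.
From mathcomp Require Import zify.
Require Import Defs.
Local Open Scope R_scope.


Lemma Cmod_eqC (z : Cx) : Cmod z = Coquelicot.Complex.Cmod z.
Proof. rewrite /Cmod /Coquelicot.Complex.Cmod. f_equal. simpl. ring. Qed.

Lemma Cmod_add_le (z w : Cx) : Cmod (Cadd z w) <= Cmod z + Cmod w.
Proof. rewrite !Cmod_eqC. exact: (Cmod_triangle z w). Qed.

Lemma Cmod_mul (z w : Cx) : Cmod (Cmul z w) = Cmod z * Cmod w.
Proof. rewrite !Cmod_eqC. exact: (Cmod_mult z w). Qed.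

Lemma Cmod_ge0 (z : Cx) : 0 <= Cmod z.
Proof. apply sqrt_pos. Qed.

Lemma Rabs_fst_le (z : Cx) : Rabs (fst z) <= Cmod z.
Proof.
  rewrite /Cmod -sqrt_Rsqr_abs. apply sqrt_le_1_alt. rewrite /Rsqr.
  have := Rle_0_sqr (snd z). rewrite /Rsqr. lra.
Qed.

Lemma Cmod_C0 : Cmod C0 = 0.
Proof. rewrite /Cmod /C0 /=. replace (0*0+0*0) with 0 by ring. apply sqrt_0. Qed.

Lemma Cmod_RtoC r : Cmod (RtoC r) = Rabs r.
Proof. rewrite /Cmod /RtoC /= -sqrt_Rsqr_abs /Rsqr. f_equal. ring. Qed.

Lemma Cmod_opp z : Cmod (Copp z) = Cmod z.
Proof. rewrite /Cmod /Copp /=. f_equal. ring. Qed.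

Lemma Cmod_sub_le (z w : Cx) : Cmod (Csub z w) <= Cmod z + Cmod w.
Proof. rewrite /Csub. have := Cmod_add_le z (Copp w). by rewrite Cmod_opp. Qed.

Lemma Cmod_pos z : z <> C0 -> 0 < fst z * fst z + snd z * snd z.
Proof.
  move=> H. destruct z as [x y]; simpl.
  destruct (Req_dec x 0) as [->|Hx].
  - destruct (Req_dec y 0) as [->|Hy]. by case: H.
    have := Rsqr_pos_lt y Hy. rewrite /Rsqr. lra.
  - have := Rsqr_pos_lt x Hx. have := Rle_0_sqr y. rewrite /Rsqr. lra.
Qed.

Lemma Cx_eq (z w : Cx) : fst z = fst w -> snd z = snd w -> z = w.
Proof. destruct z, w; simpl; by move=> -> ->. Qed.

Ltac cring := apply Cx_eq; simpl; ring.

Lemma Cmod_sub3 (x y z : Cx) : Cmod (Csub x z) <= Cmod (Csub x y) + Cmod (Csub y z).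
Proof.
  replace (Csub x z) with (Cadd (Csub x y) (Csub y z)) by cring.
  apply Cmod_add_le.
Qed.


Definition sL (s : seq nat) (g : nat -> Cx) : Cx :=
  foldr (fun k acc => Cadd (g k) acc) C0 s.
Definition sR (s : seq nat) (g : nat -> R) : R :=
  foldr (fun k acc => g k + acc) 0 s.

Lemma sL_ext s g g' : (forall k, k \in s -> g k = g' k) -> sL s g = sL s g'.
Proof.
  elim: s => [|k s IH] H //=. rewrite H ?mem_head // IH // => k' Hk'.
  apply H. by rewrite in_cons Hk' orbT.
Qed.

Lemma sL_zero s g : (forall k, k \in s -> g k = C0) -> sL s g = C0.
Proof.
  elim: s => [|k s IH] H //=. rewrite H ?mem_head // IH //.
  - cring.
  - move=> k' Hk'. apply H. by rewrite in_cons Hk' orbT.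
Qed.

Lemma sL_single s g k0 : uniq s -> k0 \in s ->
  (forall k, k \in s -> k <> k0 -> g k = C0) -> sL s g = g k0.
Proof.
  elim: s => [|k s IH] //= /andP [Hn Hu] Hin H.
  move: Hin; rewrite in_cons => /orP [/eqP Ek|Hin].
  - subst k0. rewrite sL_zero. cring.
    move=> k' Hk'. apply H. by rewrite in_cons Hk' orbT.
    move=> E; subst k'. by rewrite Hk' in Hn.
  - have Hk : g k = C0.
      apply H. apply mem_head. move=> E; subst k. by rewrite Hin in Hn.
    rewrite Hk IH //. cring.
    move=> k' Hk' Ne. apply H => //. by rewrite in_cons Hk' orbT.
Qed.

Lemma Cmod_sL s g : Cmod (sL s g) <= sR s (fun k => Cmod (g k)).
Proof.
  elim: s => [|k s IH] /=. rewrite Cmod_C0; lra.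
  have := Cmod_add_le (g k) (sL s g). lra.
Qed.

Lemma sR_le s g g' : (forall k, k \in s -> g k <= g' k) -> sR s g <= sR s g'.
Proof.
  elim: s => [|k s IH] H /=. lra.
  have := H k (mem_head _ _). have : sR s g <= sR s g'.
  apply IH => k' Hk'. apply H. by rewrite in_cons Hk' orbT. lra.
Qed.

Lemma sR_ge0 s g : (forall k, k \in s -> 0 <= g k) -> 0 <= sR s g.
Proof.
  move=> H. have : sR s (fun _ => 0) = 0. by elim: s {H} => //= k s ->; ring.
  move=> <-. by apply sR_le.
Qed.

Lemma sR_add s g g' : sR s (fun k => g k + g' k) = sR s g + sR s g'.
Proof. elim: s => [|k s IH] /=. ring. rewrite IH. ring. Qed.

Lemma sR_scal s g r : sR s (fun k => r * g k) = r * sR s g.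
Proof. elim: s => [|k s IH] /=. ring. rewrite IH. ring. Qed.

Lemma sR_ext s g g' : (forall k, k \in s -> g k = g' k) -> sR s g = sR s g'.
Proof.
  elim: s => [|k s IH] H //=. rewrite H ?mem_head // IH // => k' Hk'.
  apply H. by rewrite in_cons Hk' orbT.
Qed.

Lemma fst_sL s g : fst (sL s g) = sR s (fun k => fst (g k)).
Proof. elim: s => [|k s IH] //=. by rewrite IH. Qed.

Lemma Cmul_sL w s g : Cmul w (sL s g) = sL s (fun k => Cmul w (g k)).
Proof. elim: s => [|k s IH] /=. cring. rewrite -IH. cring. Qed.

Lemma sL_add s g g' : sL s (fun k => Cadd (g k) (g' k)) = Cadd (sL s g) (sL s g').
Proof. elim: s => [|k s IH] /=. cring. rewrite IH. cring. Qed.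

Lemma sL_sub s g g' : sL s (fun k => Csub (g k) (g' k)) = Csub (sL s g) (sL s g').
Proof. elim: s => [|k s IH] /=. cring. rewrite IH. cring. Qed.

Definition idx (N : nat) := iota 0 (2 * N).+1.
Definition zk (N k : nat) : Z := (Z.of_nat k - Z.of_nat N)%Z.

Lemma sumZ_sL N f : sumZ N f = sL (idx N) (fun k => f (zk N k)).
Proof. reflexivity. Qed.

Definition sumZR (N : nat) (f : Z -> R) : R := sR (idx N) (fun k => f (zk N k)).

Lemma idx_range N k : k \in idx N -> (- Z.of_nat N <= zk N k <= Z.of_nat N)%Z.
Proof. rewrite /idx /zk mem_iota. lia. Qed.

Lemma sumZ_ext N f f' : (forall l, (- Z.of_nat N <= l <= Z.of_nat N)%Z -> f l = f' l) ->
  sumZ N f = sumZ N f'.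
Proof. move=> H. rewrite !sumZ_sL. apply sL_ext => k Hk. apply H. by apply idx_range. Qed.

Lemma sumZ_zero N f : (forall l, (- Z.of_nat N <= l <= Z.of_nat N)%Z -> f l = C0) ->
  sumZ N f = C0.
Proof. move=> H. rewrite sumZ_sL. apply sL_zero => k Hk. apply H. by apply idx_range. Qed.

Lemma sumZ_single N f l : (- Z.of_nat N <= l <= Z.of_nat N)%Z ->
  (forall l', (- Z.of_nat N <= l' <= Z.of_nat N)%Z -> l' <> l -> f l' = C0) ->
  sumZ N f = f l.
Proof.
  move=> Hl H. rewrite sumZ_sL.
  have E : zk N (Z.to_nat (l + Z.of_nat N)) = l by rewrite /zk; lia.
  rewrite -{1}E. apply: (@sL_single _ (fun k => f (zk N k))).
  - apply iota_uniq.
  - rewrite /idx mem_iota. lia.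
  - move=> k Hk Ne. apply H. by apply idx_range. move=> E'. apply Ne.
    rewrite /zk in E'. move: Hk; rewrite /idx mem_iota. lia.
Qed.

Lemma Cmod_sumZ N f : Cmod (sumZ N f) <= sumZR N (fun l => Cmod (f l)).
Proof. rewrite sumZ_sL. apply Cmod_sL. Qed.

Lemma sumZR_le N f f' : (forall l, (- Z.of_nat N <= l <= Z.of_nat N)%Z -> f l <= f' l) ->
  sumZR N f <= sumZR N f'.
Proof. move=> H. apply sR_le => k Hk. apply H. by apply idx_range. Qed.

Lemma sumZR_ge0 N f : (forall l, (- Z.of_nat N <= l <= Z.of_nat N)%Z -> 0 <= f l) ->
  0 <= sumZR N f.
Proof. move=> H. apply sR_ge0 => k Hk. apply H. by apply idx_range. Qed.

Lemma fst_sumZ N f : fst (sumZ N f) = sumZR N (fun l => fst (f l)).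
Proof. rewrite sumZ_sL. apply fst_sL. Qed.

Lemma Cmul_sumZ w N f : Cmul w (sumZ N f) = sumZ N (fun l => Cmul w (f l)).
Proof. rewrite !sumZ_sL. apply Cmul_sL. Qed.

Lemma sumZ_sub N f g : sumZ N (fun l => Csub (f l) (g l)) = Csub (sumZ N f) (sumZ N g).
Proof. rewrite !sumZ_sL. apply sL_sub. Qed.

Lemma sumZ_add N f g : sumZ N (fun l => Cadd (f l) (g l)) = Cadd (sumZ N f) (sumZ N g).
Proof. rewrite !sumZ_sL. apply sL_add. Qed.


Lemma foldr_single (T : eqType) (s : seq T) (g : T -> Cx) k0 : uniq s -> k0 \in s ->
  (forall k, k \in s -> k <> k0 -> g k = C0) ->
  foldr (fun i acc => Cadd (g i) acc) C0 s = g k0.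
Proof.
  elim: s => [|k s IH] //= /andP [Hn Hu] Hin H.
  have Z : forall s', (forall k, k \in s' -> g k = C0) -> foldr (fun i acc => Cadd (g i) acc) C0 s' = C0.
    elim=> [|k' s' IH'] H' //=. rewrite H' ?mem_head // IH'. cring.
    move=> k'' Hk''. apply H'. by rewrite in_cons Hk'' orbT.
  move: Hin; rewrite in_cons => /orP [/eqP Ek|Hin].
  - subst k0. rewrite Z. cring.
    move=> k' Hk'. apply H. by rewrite in_cons Hk' orbT.
    move=> E; subst k'. by rewrite Hk' in Hn.
  - have Hk : g k = C0.
      apply H. apply mem_head. move=> E; subst k. by rewrite Hin in Hn.
    rewrite Hk IH //. cring.
    move=> k' Hk' Ne. apply H => //. by rewrite in_cons Hk' orbT.
Qed.

Lemma sumI_single d (f : 'I_d -> Cx) j : (forall i, i <> j -> f i = C0) -> sumI f = f j.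
Proof.
  move=> H. rewrite /sumI. apply foldr_single. apply enum_uniq. by rewrite mem_enum.
  move=> k _ Hk. by apply H.
Qed.

Lemma foldrR_single (T : eqType) (s : seq T) (g : T -> R) k0 : uniq s -> k0 \in s ->
  (forall k, k \in s -> k <> k0 -> g k = 0) ->
  foldr (fun i acc => g i + acc) 0 s = g k0.
Proof.
  elim: s => [|k s IH] //= /andP [Hn Hu] Hin H.
  have Z : forall s', (forall k, k \in s' -> g k = 0) -> foldr (fun i acc => g i + acc) 0 s' = 0.
    elim=> [|k' s' IH'] H' //=. rewrite H' ?mem_head // IH'. ring.
    move=> k'' Hk''. apply H'. by rewrite in_cons Hk'' orbT.
  move: Hin; rewrite in_cons => /orP [/eqP Ek|Hin].
  - subst k0. rewrite Z. ring.
    move=> k' Hk'. apply H. by rewrite in_cons Hk' orbT.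
    move=> E; subst k'. by rewrite Hk' in Hn.
  - have Hk : g k = 0.
      apply H. apply mem_head. move=> E; subst k. by rewrite Hin in Hn.
    rewrite Hk IH //. ring.
    move=> k' Hk' Ne. apply H => //. by rewrite in_cons Hk' orbT.
Qed.

Lemma Vnorm_single d (v : Cvec d) j : (forall i, i <> j -> v i = C0) -> Vnorm v = Cmod (v j).
Proof.
  move=> H. rewrite /Vnorm /sumIR. apply: (@foldrR_single _ _ (fun i => Cmod (v i))).
  apply enum_uniq. by rewrite mem_enum.
  move=> k _ Hk. by rewrite H // Cmod_C0.
Qed.

Lemma Vnorm_bound d (v : Cvec d) r : (forall i, Cmod (v i) <= r) -> Vnorm v <= INR d * r.
Proof.
  move=> H. rewrite /Vnorm /sumIR.
  have G : forall s : seq 'I_d, foldr (fun i acc => Cmod (v i) + acc) 0 s <= INR (size s) * r.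
    elim => [|i s IH]. simpl. lra.
    have E : INR (size (i::s)) = INR (size s) + 1 by rewrite -S_INR.
    rewrite E. change (Cmod (v i) + foldr (fun i acc => Cmod (v i) + acc) 0 s <= (INR (size s) + 1) * r).
    have := H i. lra.
  have := G (enum 'I_d). by rewrite size_enum_ord.
Qed.

Lemma Vnorm_ge0 d (v : Cvec d) : 0 <= Vnorm v.
Proof.
  rewrite /Vnorm /sumIR. elim: (enum 'I_d) => [|i s IH] /=. lra.
  have := Cmod_ge0 (v i). lra.
Qed.
Arguments Vnorm_single {d v} j.
Arguments sumI_single {d f} j.
Arguments Vnorm_bound {d v r}.


Definition inchi (a b eps : R) (l : Z) (t : R) : Prop :=
  a <= t /\ a + IZR l * eps <= t /\ t <= b /\ t <= b + IZR l * eps.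

Lemma chi_in a b eps l t : inchi a b eps l t -> chi a b eps l t = C1.
Proof.
  rewrite /chi /inchi => [[H1 [H2 [H3 H4]]]].
  destruct (Rle_dec _ _) as [?|H]; last (exfalso; apply H; by apply Rmax_lub).
  destruct (Rle_dec _ _) as [?|H] => //. exfalso; apply H; by apply Rmin_glb.
Qed.

Lemma chi_out a b eps l t : ~ inchi a b eps l t -> chi a b eps l t = C0.
Proof.
  rewrite /chi /inchi => H.
  destruct (Rle_dec _ _) as [H1|] => //. destruct (Rle_dec _ _) as [H2|] => //.
  exfalso. apply H. have := Rmax_l a (a + IZR l * eps). have := Rmax_r a (a + IZR l * eps).
  have := Rmin_l b (b + IZR l * eps). have := Rmin_r b (b + IZR l * eps). lra.
Qed.

Lemma chi_cases a b eps l t : chi a b eps l t = C0 \/ chi a b eps l t = C1.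
Proof.
  rewrite /chi. repeat destruct (Rle_dec _ _); tauto.
Qed.

Lemma chi_neg a b eps l t : chi a b eps (- l) t = chi a b eps l (t + IZR l * eps).
Proof.
  have E : inchi a b eps (-l) t <-> inchi a b eps l (t + IZR l * eps).
    rewrite /inchi opp_IZR. split; lra.
  destruct (Classical_Prop.classic (inchi a b eps l (t + IZR l * eps))) as [H|H].
  - rewrite !chi_in //. tauto.
  - rewrite !chi_out //. tauto.
Qed.

Lemma chi_const a b eps l t0 s r :
  r <= Rabs (t0 - a) -> r <= Rabs (t0 - (a + IZR l * eps)) ->
  r <= Rabs (t0 - b) -> r <= Rabs (t0 - (b + IZR l * eps)) ->
  Rabs (s - t0) < r -> chi a b eps l s = chi a b eps l t0.
Proof.
  move=> H1 H2 H3 H4 Hs.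
  have E : inchi a b eps l s <-> inchi a b eps l t0.
    rewrite /inchi. move: H1 H2 H3 H4 Hs.
    set p := IZR l * eps. unfold Rabs.
    repeat case: Rcase_abs => ? ; split; move=> [? [? [? ?]]]; repeat split; lra.
  destruct (Classical_Prop.classic (inchi a b eps l t0)) as [H|H].
  - rewrite !chi_in //. tauto.
  - rewrite !chi_out //. tauto.
Qed.

(* tent function *)
Definition phi (del t0 t : R) : R :=
  (del - Rabs (t - t0) + Rabs (del - Rabs (t - t0))) / 2.

Lemma phi_ge0 del t0 t : 0 <= phi del t0 t.
Proof. rewrite /phi. set u := Rabs (t - t0). unfold Rabs. case: Rcase_abs => ?; lra. Qed.

Lemma phi_out del t0 t : del <= Rabs (t - t0) -> phi del t0 t = 0.
Proof. move=> H. rewrite /phi [Rabs (del - _)]Rabs_left1; lra. Qed.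

Lemma phi_in del t0 t : Rabs (t - t0) < del -> 0 < phi del t0 t.
Proof. move=> H. rewrite /phi [Rabs (del - _)]Rabs_right; lra. Qed.

Lemma phi_le del t0 t : 0 <= del -> phi del t0 t <= del.
Proof.
  move=> H. rewrite /phi. have := Rabs_pos (t - t0). set u := Rabs (t - t0).
  unfold Rabs. case: Rcase_abs => ?; lra.
Qed.

Lemma phi_lip del t0 s t : Rabs (phi del t0 s - phi del t0 t) <= Rabs (s - t).
Proof.
  rewrite /phi.
  have T := Rabs_triang_inv (s - t0) (t - t0).
  have T2 := Rabs_triang_inv (t - t0) (s - t0).
  replace (s - t0 - (t - t0)) with (s - t) in T by ring.
  replace (t - t0 - (s - t0)) with (- (s - t)) in T2 by ring.
  rewrite Rabs_Ropp in T2.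
  move: T T2. set u := Rabs (s - t0). set v := Rabs (t - t0). move=> T T2.
  have Hu : 0 <= u by apply Rabs_pos. have Hv : 0 <= v by apply Rabs_pos. clearbody u v. move: T T2. unfold Rabs. repeat case: Rcase_abs => ?; lra.
Qed.

Lemma lip_continuous (f : R -> R) K x : 0 <= K ->
  (forall s t, Rabs (f s - f t) <= K * Rabs (s - t)) -> continuous f x.
Proof.
  move=> HK H. apply continuity_pt_filterlim.
  move=> e He. exists (e / (K + 1)). split.
  - apply Rdiv_lt_0_compat; lra.
  - move=> y [_ Hy]. simpl in *. rewrite /R_dist in Hy *.
    apply Rle_lt_trans with (K * Rabs (y - x)). apply H.
    apply Rle_lt_trans with ((K+1) * Rabs (y - x)).
    have := Rabs_pos (y - x). nra.
    have E : e = (K+1) * (e / (K+1)) by field; lra.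
    rewrite {1}E. apply Rmult_lt_compat_l; lra.
Qed.

Lemma phi_cont del t0 x : continuous (phi del t0) x.
Proof. apply lip_continuous with 1. lra. move=> s t. rewrite Rmult_1_l. apply phi_lip. Qed.


Lemma floor_piece a eps c : 0 < eps -> exists k : Z,
  a + IZR k * eps <= c < a + (IZR k + 1) * eps.
Proof.
  move=> He. exists (up ((c - a) / eps) - 1)%Z.
  have [H1 H2] := archimed ((c - a) / eps).
  rewrite minus_IZR. set u := IZR (up ((c - a) / eps)) in H1 H2 *.
  have E : c - a = (c - a) / eps * eps by field; lra.
  split.
  - have : (u - 1) * eps <= (c - a) / eps * eps. apply Rmult_le_compat_r; lra. lra.
  - have : (c - a) / eps * eps < (u - 1 + 1) * eps. apply Rmult_lt_compat_r; lra. lra.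
Qed.

Lemma Cpw_cont a b eps d (al be : Cvec d) x : 0 < eps -> Cpw a b eps al be x ->
  forall i c, a <= c <= b -> forall e, 0 < e -> exists del, 0 < del /\
  forall s, a <= s <= b -> Rabs (s - c) < del -> Cmod (Csub (x s i) (x c i)) < e.
Proof.
  move=> He [_ [_ Hc]] i c Hcab e Hep.
  have [k [Hk1 Hk2]] := floor_piece a eps c He.
  destruct (Req_dec c (a + IZR k * eps)) as [Ec|Nc].
  - have Hp1 : a + IZR k * eps <= c <= a + (IZR k + 1) * eps /\ a <= c <= b by lra.
    have [d1 [Hd1 H1]] := Hc k i c Hp1 e Hep.
    have Hp2 : a + IZR (k - 1) * eps <= c <= a + (IZR (k - 1) + 1) * eps /\ a <= c <= b.
      rewrite minus_IZR. lra.
    have [d2 [Hd2 H2]] := Hc (k - 1)%Z i c Hp2 e Hep.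
    exists (Rmin eps (Rmin d1 d2)). split.
    + repeat apply Rmin_pos; lra.
    + move=> s Hs Hsc.
      have M1 := Rmin_l eps (Rmin d1 d2). have M2 := Rmin_r eps (Rmin d1 d2).
      have M3 := Rmin_l d1 d2. have M4 := Rmin_r d1 d2.
      move: Hsc. unfold Rabs at 1. case: Rcase_abs => Hsg Hsc.
      * apply H2. rewrite minus_IZR. lra. unfold Rabs. case: Rcase_abs; lra.
      * apply H1. lra. unfold Rabs. case: Rcase_abs; lra.
  - have Hp1 : a + IZR k * eps <= c <= a + (IZR k + 1) * eps /\ a <= c <= b by lra.
    have [d1 [Hd1 H1]] := Hc k i c Hp1 e Hep.
    exists (Rmin d1 (Rmin (c - (a + IZR k * eps)) (a + (IZR k + 1) * eps - c))). split.
    + repeat apply Rmin_pos; lra.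
    + move=> s Hs Hsc.
      set m := Rmin (c - (a + IZR k * eps)) (a + (IZR k + 1) * eps - c) in Hsc.
      have M1 := Rmin_l d1 m. have M2 := Rmin_r d1 m.
      have M3 := Rmin_l (c - (a + IZR k * eps)) (a + (IZR k + 1) * eps - c).
      have M4 := Rmin_r (c - (a + IZR k * eps)) (a + (IZR k + 1) * eps - c).
      rewrite -/m in M3 M4.
      apply H1 => //.
      move: Hsc. unfold Rabs. case: Rcase_abs => ? ?; lra.
      lra.
Qed.


Lemma exists_min_seq (T : eqType) (s : seq T) (P : T -> R -> Prop) :
  (forall k r r', 0 < r' <= r -> P k r -> P k r') ->
  (forall k, k \in s -> exists r, 0 < r /\ P k r) ->
  exists r, 0 < r /\ forall k, k \in s -> P k r.
Proof.
  move=> Hm. elim: s => [|k s IH] H.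
  - exists 1. split. lra. by [].
  - have [r1 [Hr1 P1]] := H k (mem_head _ _).
    have [r2 [Hr2 P2]] : exists r, 0 < r /\ forall k, k \in s -> P k r.
      apply IH => k' Hk'. apply H. by rewrite in_cons Hk' orbT.
    exists (Rmin r1 r2). split. by apply Rmin_pos.
    move=> k' /orP [/eqP ->|Hk'].
    + apply Hm with r1 => //. split. by apply Rmin_pos. apply Rmin_l.
    + apply Hm with r2. split. by apply Rmin_pos. apply Rmin_r. by apply P2.
Qed.

Lemma exists_min_Z (N : nat) (P : Z -> R -> Prop) :
  (forall k r r', 0 < r' <= r -> P k r -> P k r') ->
  (forall l, (- Z.of_nat N <= l <= Z.of_nat N)%Z -> exists r, 0 < r /\ P l r) ->
  exists r, 0 < r /\ forall l, (- Z.of_nat N <= l <= Z.of_nat N)%Z -> P l r.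
Proof.
  move=> Hm H.
  have [r [Hr Hp]] := @exists_min_seq _ (idx N) (fun k r => P (zk N k) r)
     (fun k => Hm (zk N k)) (fun k Hk => H (zk N k) (idx_range N k Hk)).
  exists r. split => // l Hl.
  have E : zk N (Z.to_nat (l + Z.of_nat N)) = l by rewrite /zk; lia.
  rewrite -E. apply Hp. rewrite /idx mem_iota. lia.
Qed.

Lemma exists_min_I (d : nat) (P : 'I_d -> R -> Prop) :
  (forall k r r', 0 < r' <= r -> P k r -> P k r') ->
  (forall i, exists r, 0 < r /\ P i r) ->
  exists r, 0 < r /\ forall i, P i r.
Proof.
  move=> Hm H.
  have [r [Hr Hp]] := @exists_min_seq _ (enum 'I_d) P Hm (fun k _ => H k).
  exists r. split => // i. apply Hp. by rewrite mem_enum.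
Qed.

Lemma chi_C1_in a b eps l t : chi a b eps l t = C1 -> inchi a b eps l t.
Proof.
  move=> H. destruct (Classical_Prop.classic (inchi a b eps l t)) as [?|Hn] => //.
  rewrite chi_out // in H. rewrite /C0 /C1 in H. injection H. lra.
Qed.

Arguments chi_C1_in {a b eps l t}.
Arguments Cpw_cont {a b eps d al be x}.

Lemma Box_cont a b eps N c d (al be : Cvec d) x : 0 < eps -> Cpw a b eps al be x ->
  forall c0, a <= c0 <= b ->
  (forall l, (- Z.of_nat N <= l <= Z.of_nat N)%Z -> exists r, 0 < r /\
     forall t, Rabs (t - c0) < r -> chi a b eps (- l) t = chi a b eps (- l) c0) ->
  forall i e, 0 < e -> exists del, 0 < del /\ forall t, a <= t <= b -> Rabs (t - c0) < del ->
    Cmod (Csub (Box a b eps N c x t i) (Box a b eps N c x c0 i)) < e.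
Proof.
  move=> He Hx c0 Hc0 Hchi i e Hep.
  set S := sumZR N (fun l => Cmod (c l)).
  have HS : 0 <= S. apply sumZR_ge0 => l _. apply Cmod_ge0.
  set e' := e / (S + 1).
  have He' : 0 < e'. apply Rdiv_lt_0_compat; lra.
  pose P0 := (fun l r =>
     (forall t, Rabs (t - c0) < r -> chi a b eps (- l) t = chi a b eps (- l) c0) /\
     (chi a b eps (- l) c0 = C1 -> forall s, a <= s <= b -> Rabs (s - (c0 + IZR l * eps)) < r ->
        Cmod (Csub (x s i) (x (c0 + IZR l * eps) i)) < e')).
  have HM : forall k r r', 0 < r' <= r -> P0 k r -> P0 k r'.
    move=> k r r' Hr [H1 H2]. split.
    + move=> t Ht. apply H1. lra.
    + move=> Hc s Hs Hs'. apply H2 => //. lra.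
  have HE : forall l, (- Z.of_nat N <= l <= Z.of_nat N)%Z -> exists r, 0 < r /\ P0 l r.
    move=> l Hl. have [r [Hr Hr']] := Hchi l Hl.
    case: (chi_cases a b eps (- l) c0) => Hc.
    + exists r. split => //. split => //. by rewrite Hc /C0 /C1 => E; injection E; lra.
    + have Hin := chi_C1_in Hc. rewrite /inchi opp_IZR in Hin.
      have [d1 [Hd1 H1]] := Cpw_cont He Hx i (c0 + IZR l * eps) ltac:(lra) e' He'.
      exists (Rmin r d1). split. by apply Rmin_pos. split.
      * move=> t Ht. apply Hr'. have := Rmin_l r d1. lra.
      * move=> _ s Hs Hs'. apply H1 => //. have := Rmin_r r d1. lra.
  have [del [Hdel Hd]] := @exists_min_Z N P0 HM HE.
  - exists del. split => // t Ht Htc.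
    rewrite /Box -sumZ_sub.
    apply Rle_lt_trans with (sumZR N (fun l => Cmod (c l) * e')).
    + apply Rle_trans with (1 := Cmod_sumZ _ _). apply sumZR_le => l Hl.
      have [D1 D2] := Hd l Hl. rewrite (D1 t Htc).
      case: (chi_cases a b eps (- l) c0) => Hc; rewrite Hc.
      * replace (Csub _ _) with C0 by cring. rewrite Cmod_C0.
        have := Cmod_ge0 (c l). nra.
      * replace (Csub _ _) with (Cmul (c l) (Csub (x (t + IZR l * eps) i) (x (c0 + IZR l * eps) i))) by cring.
        rewrite Cmod_mul. apply Rmult_le_compat_l. apply Cmod_ge0. apply Rlt_le.
        have Hin : inchi a b eps (- l) t. apply chi_C1_in. by rewrite D1.
        rewrite /inchi opp_IZR in Hin.
        apply D2 => //. lra. replace (t + IZR l * eps - (c0 + IZR l * eps)) with (t - c0) by ring. done.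
    + have E1 : sumZR N (fun l => Cmod (c l) * e') = S * e'.
        rewrite /S /sumZR Rmult_comm -sR_scal. apply sR_ext => k _. ring.
      rewrite E1.
      have : S * e' < (S + 1) * e' by nra.
      have E : (S + 1) * e' = e by rewrite /e'; field; lra. lra.
Qed.


Definition Yv {d} (X H : Cvec d) (u : R) : Cvec d := fun i => Cadd (X i) (Cmul (RtoC u) (H i)).

Lemma Yv0 d (X H : Cvec d) : Yv X H 0 = X.
Proof. apply functional_extensionality => i. rewrite /Yv. cring. Qed.

Lemma Lderiv a b d (L : R -> Cvec d -> Cvec d -> Cx) Lx Lv j t (X V H K : Cvec d) u :
  complex_partials a b L Lx Lv -> a <= t <= b ->
  (forall i, i <> j -> H i = C0) -> (forall i, i <> j -> K i = C0) ->
  derivable_pt_lim (fun u => fst (L t (Yv X H u) (Yv V K u))) u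
    (fst (Cadd (Cmul (Lx j t (Yv X H u) (Yv V K u)) (H j))
               (Cmul (Lv j t (Yv X H u) (Yv V K u)) (K j)))).
Proof.
  move=> HL Ht HH HK e He.
  set M := Cmod (H j) + Cmod (K j).
  have HM : 0 <= M by have := Cmod_ge0 (H j); have := Cmod_ge0 (K j); rewrite /M; lra.
  set e' := e / (2 * (M + 1)).
  have He' : 0 < e' by apply Rdiv_lt_0_compat; lra.
  have [del [Hdel Hd]] := HL t (Yv X H u) (Yv V K u) Ht e' He'.
  have Hdp : 0 < del / (M + 1) by apply Rdiv_lt_0_compat; lra.
  exists (mkposreal _ Hdp) => v Hv Hvd. simpl in Hvd.
  set h' : Cvec d := fun i => Cmul (RtoC v) (H i).
  set k' : Cvec d := fun i => Cmul (RtoC v) (K i).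
  have Hh'0 : forall i, i <> j -> h' i = C0 by move=> i Hi; rewrite /h' HH //; cring.
  have Hk'0 : forall i, i <> j -> k' i = C0 by move=> i Hi; rewrite /k' HK //; cring.
  have Hn : Vnorm h' + Vnorm k' < del.
    rewrite (Vnorm_single j Hh'0) (Vnorm_single j Hk'0) /h' /k' !Cmod_mul Cmod_RtoC.
    have Hva := Rabs_pos v.
    have : Rabs v * (M + 1) < del / (M + 1) * (M + 1). apply Rmult_lt_compat_r; lra.
    have E : del / (M + 1) * (M + 1) = del by field; lra.
    rewrite /M in E *. nra.
  have Hb := Hd h' k' Hn.
  have E1 : Vadd (Yv X H u) h' = Yv X H (u + v).
    apply functional_extensionality => i. rewrite /Vadd /Yv /h'. cring.
  have E2 : Vadd (Yv V K u) k' = Yv V K (u + v).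
    apply functional_extensionality => i. rewrite /Vadd /Yv /k'. cring.
  rewrite E1 E2 in Hb.
  set D := Cadd (Cmul (Lx j t (Yv X H u) (Yv V K u)) (H j)) (Cmul (Lv j t (Yv X H u) (Yv V K u)) (K j)) in Hb *.
  have E3 : sumI (fun i => Cadd (Cmul (Lx i t (Yv X H u) (Yv V K u)) (h' i))
                               (Cmul (Lv i t (Yv X H u) (Yv V K u)) (k' i))) = Cmul (RtoC v) D.
    rewrite (sumI_single j). rewrite /D /h' /k'. cring.
    move=> i Hi. rewrite Hh'0 // Hk'0 //. cring.
  rewrite E3 in Hb.
  set A := L t (Yv X H (u + v)) (Yv V K (u + v)) in Hb *.
  set B := L t (Yv X H u) (Yv V K u) in Hb *.
  have Hf := Rabs_fst_le (Csub (Csub A B) (Cmul (RtoC v) D)).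
  have Hnv : Vnorm h' + Vnorm k' = Rabs v * M.
    rewrite (Vnorm_single j Hh'0) (Vnorm_single j Hk'0) /h' /k' !Cmod_mul Cmod_RtoC /M. ring.
  rewrite Hnv in Hb.
  have Hvp : 0 < Rabs v by apply Rabs_pos_lt.
  have Eq : (fst A - fst B) / v - fst D = fst (Csub (Csub A B) (Cmul (RtoC v) D)) / v.
    simpl. field. lra.
  rewrite Eq Rabs_div //.
  have Hb2 : Rabs (fst (Csub (Csub A B) (Cmul (RtoC v) D))) <= e' * M * Rabs v.
    have : e' * (Rabs v * M) = e' * M * Rabs v by ring. lra.
  apply Rle_lt_trans with (e' * M).
  - apply (Rmult_le_reg_r (Rabs v)) => //. rewrite /Rdiv Rmult_assoc Rinv_l; lra.
  - have : e' * M <= e / 2 * (M / (M+1)).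
      rewrite /e'. apply Req_le. field. lra.
    have : M / (M + 1) <= 1. apply (Rmult_le_reg_r (M+1)); first lra.
      rewrite /Rdiv Rmult_assoc Rinv_l; lra.
    nra.
Qed.

Lemma Lmvt a b d (L : R -> Cvec d -> Cvec d -> Cx) Lx Lv j t (X V H K : Cvec d) eta :
  complex_partials a b L Lx Lv -> a <= t <= b ->
  (forall i, i <> j -> H i = C0) -> (forall i, i <> j -> K i = C0) -> 0 < eta ->
  exists th, 0 < th < eta /\
   fst (L t (Yv X H eta) (Yv V K eta)) - fst (L t X V) =
   fst (Cadd (Cmul (Lx j t (Yv X H th) (Yv V K th)) (H j))
             (Cmul (Lv j t (Yv X H th) (Yv V K th)) (K j))) * eta.
Proof.
  move=> HL Ht HH HK He.
  have [th [E Hth]] := MVT_cor2 (fun u => fst (L t (Yv X H u) (Yv V K u)))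
    (fun u => fst (Cadd (Cmul (Lx j t (Yv X H u) (Yv V K u)) (H j))
             (Cmul (Lv j t (Yv X H u) (Yv V K u)) (K j)))) 0 eta He
    (fun u _ => @Lderiv a b d L Lx Lv j t X V H K u HL Ht HH HK).
  exists th. split => //. rewrite Yv0 Yv0 in E. rewrite E. ring.
Qed.


Arguments chi_const {a b eps l t0 s r}.

Definition far (N : nat) (a b eps r t0 : R) := forall k : Z,
  (- Z.of_nat (2 * N) <= k <= Z.of_nat (2 * N))%Z ->
  r <= Rabs (t0 - (a + IZR k * eps)) /\ r <= Rabs (t0 - (b + IZR k * eps)).

Lemma far_ab N a b eps r t0 : 0 < r -> far N a b eps r t0 -> a <= t0 <= b -> a + r <= t0 <= b - r.
Proof.
  move=> Hr Hf Ht. have [H1 H2] := Hf 0%Z ltac:(lia).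
  rewrite Rmult_0_l Rplus_0_r in H1; rewrite Rmult_0_l Rplus_0_r in H2. move: H1 H2. unfold Rabs.
  repeat case: Rcase_abs => ?; lra.
Qed.

Lemma far_chi_const N a b eps r t0 l s : far N a b eps r t0 ->
  (- Z.of_nat N <= l <= Z.of_nat N)%Z -> Rabs (s - t0) < r ->
  chi a b eps l s = chi a b eps l t0.
Proof.
  move=> Hf Hl Hs. have [H1 H2] := Hf 0%Z ltac:(lia). have [H3 H4] := Hf l ltac:(lia).
  rewrite Rmult_0_l Rplus_0_r in H1; rewrite Rmult_0_l Rplus_0_r in H2.
  apply: (chi_const H1 H3 H2 H4 Hs).
Qed.

Lemma far_ins N a b eps r t0 l : 0 < r -> far N a b eps r t0 ->
  (- Z.of_nat N <= l <= Z.of_nat N)%Z -> chi a b eps l t0 = C1 ->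
  a < t0 - IZR l * eps < b.
Proof.
  move=> Hr Hf Hl Hc. have [H1 H2] := Hf l ltac:(lia).
  have := chi_C1_in Hc. rewrite /inchi. move: H1 H2. unfold Rabs.
  repeat case: Rcase_abs => ?; lra.
Qed.

Lemma far_chi_shift N a b eps r t0 l l' t : far N a b eps r t0 ->
  (- Z.of_nat N <= l <= Z.of_nat N)%Z -> (- Z.of_nat N <= l' <= Z.of_nat N)%Z ->
  Rabs (t - (t0 - IZR l * eps)) < r ->
  chi a b eps (- l') t = chi a b eps (- l') (t0 - IZR l * eps).
Proof.
  move=> Hf Hl Hl' Ht. rewrite !chi_neg.
  set p := t0 - IZR l * eps + IZR l' * eps.
  have [H1 H2] := Hf (l - l')%Z ltac:(lia). have [H3 H4] := Hf l ltac:(lia).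
  rewrite minus_IZR in H1 H2.
  apply: (chi_const (t0 := p) (r := r)).
  - replace (p - a) with (t0 - (a + (IZR l - IZR l') * eps)) by (rewrite /p; ring). done.
  - replace (p - (a + IZR l' * eps)) with (t0 - (a + IZR l * eps)) by (rewrite /p; ring). done.
  - replace (p - b) with (t0 - (b + (IZR l - IZR l') * eps)) by (rewrite /p; ring). done.
  - replace (p - (b + IZR l' * eps)) with (t0 - (b + IZR l * eps)) by (rewrite /p; ring). done.
  - replace (t + IZR l' * eps - p) with (t - (t0 - IZR l * eps)) by (rewrite /p; ring). done.
Qed.

Lemma phi_shift del t0 t s : phi del t0 (t + s) = phi del (t0 - s) t.
Proof. rewrite /phi. by replace (t + s - t0) with (t - (t0 - s)) by ring. Qed.

Lemma Box_lin a b eps N c d (x h : R -> Cvec d) eta t :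
  Box a b eps N c (fun t i => Cadd (x t i) (Cmul (RtoC eta) (h t i))) t =
  Yv (Box a b eps N c x t) (Box a b eps N c h t) eta.
Proof.
  apply functional_extensionality => i. rewrite /Box /Yv Cmul_sumZ -sumZ_add.
  apply sumZ_ext => l _. cring.
Qed.

Lemma Box_single a b eps N c d (h : R -> Cvec d) j t :
  (forall s i, i <> j -> h s i = C0) -> forall i, i <> j -> Box a b eps N c h t i = C0.
Proof.
  move=> H i Hi. rewrite /Box. apply sumZ_zero => l _. rewrite H //. cring.
Qed.

Lemma Yv_zero d (X H : Cvec d) u : (forall i, H i = C0) -> Yv X H u = X.
Proof. move=> HH. apply functional_extensionality => i. rewrite /Yv HH. cring. Qed.

Lemma sumZR_single N f l : (- Z.of_nat N <= l <= Z.of_nat N)%Z ->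
  (forall l', (- Z.of_nat N <= l' <= Z.of_nat N)%Z -> l' <> l -> f l' = 0) ->
  sumZR N f = f l.
Proof.
  move=> Hl H. rewrite /sumZR.
  have E : zk N (Z.to_nat (l + Z.of_nat N)) = l by rewrite /zk; lia.
  rewrite -{1}E. apply: (@foldrR_single _ _ (fun k => f (zk N k))).
  - apply iota_uniq.
  - rewrite /idx mem_iota. lia.
  - move=> k Hk Ne. apply H. by apply idx_range. move=> E'. apply Ne.
    rewrite /zk in E'. move: Hk; rewrite /idx mem_iota. lia.
Qed.

Lemma sumZR_add N f g : sumZR N (fun l => f l + g l) = sumZR N f + sumZR N g.
Proof. apply sR_add. Qed.
Lemma sumZR_scal N f r : sumZR N (fun l => r * f l) = r * sumZR N f.
Proof. apply sR_scal. Qed.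
Lemma sumZR_ext N f g : (forall l, (- Z.of_nat N <= l <= Z.of_nat N)%Z -> f l = g l) ->
  sumZR N f = sumZR N g.
Proof. move=> H. apply sR_ext => k Hk. apply H. by apply idx_range. Qed.


Lemma ex_RInt_cont (f : R -> R) p q : (forall x, continuous f x) -> ex_RInt f p q.
Proof. move=> H. apply: (@ex_RInt_continuous R_CompleteNormedModule) => z _. apply H. Qed.

Lemma RInt_zero_fun (f : R -> R) p q : p <= q -> (forall t, p < t < q -> f t = 0) -> RInt f p q = 0.
Proof.
  move=> Hpq H. rewrite (RInt_ext f (fun _ => 0)).
  - rewrite RInt_const /scal /= /mult /=. ring.
  - move=> t [H1 H2]. apply H. rewrite Rmin_left in H1; try lra. rewrite Rmax_right in H2; lra.
Qed.

Lemma tent_supp del c' p q : 0 < del -> p <= c' - del -> c' + del <= q ->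
  RInt (phi del c') p q = RInt (phi del c') (c' - del) (c' + del).
Proof.
  move=> Hd H1 H2.
  have Ex : forall u v, ex_RInt (phi del c') u v by move=> u v; apply ex_RInt_cont, phi_cont.
  rewrite -(RInt_Chasles (phi del c') p (c' - del) q) // -(RInt_Chasles (phi del c') (c' - del) (c' + del) q) //.
  rewrite (RInt_zero_fun (phi del c') p (c' - del)) //.
  rewrite (RInt_zero_fun (phi del c') (c' + del) q) //.
  - rewrite /plus /=. ring.
  - move=> t Ht. apply phi_out. rewrite Rabs_right; lra.
  - move=> t Ht. apply phi_out. rewrite Rabs_left1; lra.
Qed.

Definition Itent (del : R) := RInt (phi del 0) (- del) del.

Lemma tent_trans del c' : RInt (phi del c') (c' - del) (c' + del) = Itent del.
Proof.
  rewrite /Itent.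
  have H := RInt_comp_lin (phi del c') 1 c' (- del) del.
  replace (1 * - del + c') with (c' - del) in H by ring.
  replace (1 * del + c') with (c' + del) in H by ring.
  rewrite -H. 2: apply ex_RInt_cont, phi_cont.
  apply RInt_ext => y _. rewrite /scal /= /mult /=.
  rewrite Rmult_1_l Rmult_1_l phi_shift. f_equal. ring.
Qed.

Lemma Itent_pos del : 0 < del -> 0 < Itent del.
Proof.
  move=> Hd. apply RInt_gt_0. lra.
  - move=> x Hx. apply phi_in. unfold Rabs. case: Rcase_abs => ?; lra.
  - move=> x _. apply phi_cont.
Qed.

Lemma tent_full del c' p q : 0 < del -> p <= c' - del -> c' + del <= q ->
  RInt (phi del c') p q = Itent del.
Proof. move=> *. by rewrite tent_supp // tent_trans. Qed.

Lemma sR_cont s (g : nat -> R -> R) x : (forall k, continuous (g k) x) ->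
  continuous (fun t => sR s (fun k => g k t)) x.
Proof.
  move=> H. elim: s => [|k s IH] /=. apply continuous_const.
  apply: (continuous_plus (fun t => g k t) (fun t => sR s (fun k => g k t))) => //.
Qed.

Lemma RInt_sR s (g : nat -> R -> R) p q : (forall k x, continuous (g k) x) ->
  RInt (fun t => sR s (fun k => g k t)) p q = sR s (fun k => RInt (g k) p q).
Proof.
  move=> H. elim: s => [|k s IH] /=.
  - rewrite RInt_const /scal /= /mult /=. ring.
  - rewrite -IH. apply: (RInt_plus (g k) (fun t => sR s (fun k => g k t))).
    + apply ex_RInt_cont, H.
    + apply ex_RInt_cont => x. apply sR_cont => k'. apply H.
Qed.


Arguments Box_cont {a b eps N c d al be x}.
Arguments far_ab {N a b eps r t0}.
Arguments far_chi_const {N a b eps r t0 l s}.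
Arguments far_ins {N a b eps r t0 l}.
Arguments far_chi_shift {N a b eps r t0 l l' t}.
Arguments Lmvt {a b d L Lx Lv} j {t X V H K eta}.

Lemma Cmod_chi a b eps l t : Cmod (chi a b eps l t) <= 1.
Proof.
  case: (chi_cases a b eps l t) => ->. rewrite Cmod_C0; lra.
  rewrite /Cmod /C1 /=. replace (1 * 1 + 0 * 0) with 1 by ring. rewrite sqrt_1. lra.
Qed.

Lemma IZR_ne_ge1 (k : Z) : k <> 0%Z -> 1 <= Rabs (IZR k).
Proof.
  move=> Hk. destruct (Z_lt_le_dec 0 k).
  - rewrite Rabs_right. apply IZR_le. lia. apply Rle_ge, IZR_le. lia.
  - rewrite Rabs_left. have : IZR k <= -1 by apply IZR_le; lia. lra.
    apply IZR_lt. lia.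
Qed.

Lemma conj_pos z : z <> C0 -> 0 < fst (Cmul (fst z, - snd z) z).
Proof. move=> H. have := Cmod_pos _ H. destruct z as [u v]. simpl. nra. Qed.

Definition hcrit a b eps N c {d} (x : R -> Cvec d) (L : R -> Cvec d -> Cvec d -> Cx) :=
  forall h : R -> Cvec d,
     Cpw a b eps (fun _ => C0) (fun _ => C0) h ->
     exists A : R -> Cx,
       (forall eta : R,
          let y := fun t j => Cadd (x t j) (Cmul (RtoC eta) (h t j)) in
          is_RInt_C (fun t => L t (y t) (Box a b eps N c y t)) a b (A eta)) /\
       derivable_pt_lim (fun eta => fst (A eta)) 0 0 /\
       derivable_pt_lim (fun eta => snd (A eta)) 0 0.

Lemma core (a b eps : R) (N d : nat) (c : Z -> Cx) (alpha beta : Cvec d)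
  (L : R -> Cvec d -> Cvec d -> Cx)
  (Lx Lv : 'I_d -> R -> Cvec d -> Cvec d -> Cx)
  (x : R -> Cvec d) (j : 'I_d) (r t0 : R) :
  a < b -> 0 < eps ->
  complex_partials a b L Lx Lv ->
  (forall j, jointly_continuous a b (Lx j)) ->
  (forall j, jointly_continuous a b (Lv j)) ->
  Cpw a b eps alpha beta x -> hcrit a b eps N c x L ->
  0 < r -> far N a b eps r t0 -> a <= t0 <= b ->
  Cadd (Box_minus a b eps N c (fun s => Lv j s (x s) (Box a b eps N c x s)) t0)
       (Lx j t0 (x t0) (Box a b eps N c x t0)) = C0.
Proof.
  move=> Hab He HL HLx HLv Hx Hcrit Hr Hfar Ht0.
  apply NNPP => HE.
  have Hab0 := far_ab Hr Hfar Ht0.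
  set BX := Box a b eps N c x.
  set E0 := Cadd _ _ in HE.
  pose w : Cx := (fst E0, - snd E0).
  set Q := fst (Cmul w E0).
  have HQ : 0 < Q by apply conj_pos.
  pose cl l := t0 - IZR l * eps.
  pose LVc l := Lv j (cl l) (x (cl l)) (BX (cl l)).
  pose LXc l := Lx j (cl l) (x (cl l)) (BX (cl l)).
  pose al l := fst (Cmul w (Cmul (c l) (Cmul (LVc l) (chi a b eps l t0)))).
  pose be := fst (Cmul w (LXc 0%Z)).
  have Ecl0 : cl 0%Z = t0 by rewrite /cl /=; ring.
  have HQ2 : Q = be + sumZR N al.
    rewrite /Q /E0 /be /LXc Ecl0.
    have -> : forall u v : Cx, Cmul w (Cadd u v) = Cadd (Cmul w u) (Cmul w v) by move=> u v; cring.
    rewrite /Box_minus Cmul_sumZ.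
    have -> : forall u v : Cx, fst (Cadd u v) = fst u + fst v by [].
    rewrite fst_sumZ Rplus_comm. reflexivity.
  pose M l := Cmod w * (1 + Cmod (c l)).
  have HM : forall l, 0 <= M l.
    move=> l. rewrite /M. have := Cmod_ge0 w. have := Cmod_ge0 (c l). nra.
  set SM := sumZR N M.
  have HSM : 0 <= SM by apply sumZR_ge0 => l _; apply HM.
  set SC := sumZR N (fun l => Cmod (c l)).
  have HSC : 0 <= SC by apply sumZR_ge0 => l _; apply Cmod_ge0.
  set ep := Q / (4 * (SM + 1)).
  have Hep : 0 < ep by apply Rdiv_lt_0_compat; lra.
  set D1 := INR d + 1.
  have HD1 : 0 < D1 by have := pos_INR d; rewrite /D1; lra.
  pose ins l := a < cl l < b.
  have [rho [Hrho Hrhoj]] : exists rho, 0 < rho /\ forall l, (- Z.of_nat N <= l <= Z.of_nat N)%Z ->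
     ins l -> forall s y v, a <= s <= b ->
     Rabs (s - cl l) + Vnorm (Vsub y (x (cl l))) + Vnorm (Vsub v (BX (cl l))) < rho ->
     Cmod (Csub (Lx j s y v) (LXc l)) < ep /\ Cmod (Csub (Lv j s y v) (LVc l)) < ep.
    pose P0 := fun l rr => ins l -> forall s y v, a <= s <= b ->
     Rabs (s - cl l) + Vnorm (Vsub y (x (cl l))) + Vnorm (Vsub v (BX (cl l))) < rr ->
     Cmod (Csub (Lx j s y v) (LXc l)) < ep /\ Cmod (Csub (Lv j s y v) (LVc l)) < ep.
    apply (@exists_min_Z N P0).
    - move=> k rr rr' Hrr H Hi s y v Hs Hlt. apply H => //. lra.
    - move=> l Hl. destruct (classic (ins l)) as [Hi|Hi].
      + have Hcl : a <= cl l <= b by rewrite /ins in Hi; lra.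
        have [r1 [Hr1 H1]] := HLx j (cl l) (x (cl l)) (BX (cl l)) Hcl ep Hep.
        have [r2 [Hr2 H2]] := HLv j (cl l) (x (cl l)) (BX (cl l)) Hcl ep Hep.
        exists (Rmin r1 r2). split. by apply Rmin_pos. move=> _ s y v Hs Hlt. split.
        * apply H1 => //. have := Rmin_l r1 r2. lra.
        * apply H2 => //. have := Rmin_r r1 r2. lra.
      + exists 1. split. lra. by move=> /Hi.
  have [sig [Hsig Hsigp]] : exists sig, 0 < sig /\ forall l, (- Z.of_nat N <= l <= Z.of_nat N)%Z ->
     ins l -> forall s, a <= s <= b -> Rabs (s - cl l) < sig -> forall i,
     Cmod (Csub (x s i) (x (cl l) i)) < rho / (6 * D1) /\
     Cmod (Csub (BX s i) (BX (cl l) i)) < rho / (6 * D1).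
    have Hrd : 0 < rho / (6 * D1) by apply Rdiv_lt_0_compat; lra.
    pose P1 := fun l ss => ins l -> forall s, a <= s <= b -> Rabs (s - cl l) < ss -> forall i,
     Cmod (Csub (x s i) (x (cl l) i)) < rho / (6 * D1) /\
     Cmod (Csub (BX s i) (BX (cl l) i)) < rho / (6 * D1).
    apply (@exists_min_Z N P1).
    - move=> k rr rr' Hrr H Hi s Hs Hlt. apply H => //. lra.
    - move=> l Hl. destruct (classic (ins l)) as [Hi|Hi].
      + have Hcl : a <= cl l <= b by rewrite /ins in Hi; lra.
        have Hchi : forall l', (- Z.of_nat N <= l' <= Z.of_nat N)%Z -> exists r', 0 < r' /\
           forall t, Rabs (t - cl l) < r' -> chi a b eps (- l') t = chi a b eps (- l') (cl l).
          move=> l' Hl'. exists r. split => // t Ht. exact: (far_chi_shift Hfar Hl Hl' Ht).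
        pose Pi := fun (i : 'I_d) ss => forall s, a <= s <= b -> Rabs (s - cl l) < ss ->
           Cmod (Csub (x s i) (x (cl l) i)) < rho / (6 * D1) /\
           Cmod (Csub (BX s i) (BX (cl l) i)) < rho / (6 * D1).
        have [ss [Hss Hssp]] : exists ss, 0 < ss /\ forall i, Pi i ss.
          apply (@exists_min_I d Pi).
          * move=> k rr rr' Hrr H s Hs Hlt. apply H => //. lra.
          * move=> i.
            have [d1 [Hd1 H1]] := Cpw_cont He Hx i (cl l) Hcl _ Hrd.
            have [d2 [Hd2 H2]] := Box_cont (N:=N) (c:=c) He Hx (cl l) Hcl Hchi i _ Hrd.
            exists (Rmin d1 d2). split. by apply Rmin_pos. move=> s Hs Hlt. split.
            - apply H1 => //. have := Rmin_l d1 d2. lra.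
            - apply H2 => //. have := Rmin_r d1 d2. lra.
        exists ss. split => // _ s Hs Hlt i. by apply Hssp.
      + exists 1. split. lra. by move=> /Hi.
  set del := Rmin (Rmin (eps / 4) (r / 2)) (Rmin (rho / 3) sig).
  have Hdel : 0 < del by repeat apply Rmin_pos; lra.
  have Hdel1 : del <= eps / 4 by rewrite /del; have := Rmin_l (Rmin (eps / 4) (r / 2)) (Rmin (rho / 3) sig); have := Rmin_l (eps/4) (r/2); lra.
  have Hdel2 : del <= r / 2 by rewrite /del; have := Rmin_l (Rmin (eps / 4) (r / 2)) (Rmin (rho / 3) sig); have := Rmin_r (eps/4) (r/2); lra.
  have Hdel3 : del <= rho / 3 by rewrite /del; have := Rmin_r (Rmin (eps / 4) (r / 2)) (Rmin (rho / 3) sig); have := Rmin_l (rho/3) sig; lra.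
  have Hdel4 : del <= sig by rewrite /del; have := Rmin_r (Rmin (eps / 4) (r / 2)) (Rmin (rho / 3) sig); have := Rmin_r (rho/3) sig; lra.
  pose h : R -> Cvec d := fun t i => if i == j then Cmul w (RtoC (phi del t0 t)) else C0.
  have Hw0 := Cmod_ge0 w.
  have Hh : Cpw a b eps (fun _ => C0) (fun _ => C0) h.
    split; [|split].
    - apply functional_extensionality => i. rewrite /h. case: (i == j) => //.
      rewrite phi_out. cring. rewrite Rabs_left1; lra.
    - apply functional_extensionality => i. rewrite /h. case: (i == j) => //.
      rewrite phi_out. cring. rewrite Rabs_right; lra.
    - move=> l i t _ e He'. exists (e / (Cmod w + 1)). split. apply Rdiv_lt_0_compat; lra.
      move=> s _ Hst. rewrite /h. case: (i == j).
      + replace (Csub _ _) with (Cmul w (RtoC (phi del t0 s - phi del t0 t))) by cring.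
        rewrite Cmod_mul Cmod_RtoC.
        have := phi_lip del t0 s t. have := Rabs_pos (phi del t0 s - phi del t0 t).
        have : Cmod w * (e / (Cmod w + 1)) < e.
          apply (Rmult_lt_reg_r (Cmod w + 1)). lra.
          have -> : Cmod w * (e / (Cmod w + 1)) * (Cmod w + 1) = Cmod w * e by field; lra. nra.
        nra.
      + replace (Csub _ _) with C0 by cring. rewrite Cmod_C0. lra.
  have [A [HA [HA1 _]]] := Hcrit h Hh.
  set Bh := Box a b eps N c h.
  have Hh0 : forall s i, i <> j -> h s i = C0.
    move=> s i Hi. rewrite /h. have -> : (i == j) = false by apply/eqP. done.
  have Hhj : forall s, h s j = Cmul w (RtoC (phi del t0 s)) by move=> s; rewrite /h eqxx.
  have HB0 : forall s i, i <> j -> Bh s i = C0.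
    move=> s i Hi. by apply: (@Box_single a b eps N c d h j s Hh0).
  have Hhb : forall s i, Cmod (h s i) <= Cmod w * del.
    move=> s i. rewrite /h. case: (i == j).
    + rewrite Cmod_mul Cmod_RtoC Rabs_right. apply Rmult_le_compat_l => //. apply phi_le; lra.
      apply Rle_ge, phi_ge0.
    + rewrite Cmod_C0. nra.
  have HBb : forall s i, Cmod (Bh s i) <= SC * (Cmod w * del).
    move=> s i. rewrite /Bh /Box. apply Rle_trans with (1 := Cmod_sumZ _ _).
    apply Rle_trans with (sumZR N (fun l => Cmod (c l) * (Cmod w * del))).
    + apply sumZR_le => l _. rewrite !Cmod_mul. apply Rmult_le_compat_l. apply Cmod_ge0.
      have := Hhb (s + IZR l * eps) i. have := Cmod_chi a b eps (- l) s.
      have := Cmod_ge0 (chi a b eps (- l) s). have := Cmod_ge0 (h (s + IZR l * eps) i). nra.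
    + rewrite /SC. rewrite -(Rmult_comm (Cmod w * del)) -sumZR_scal. apply Req_le.
      apply sumZR_ext => l _. ring.
  pose Fe eta t := fst (L t (Yv (x t) (h t) eta) (Yv (BX t) (Bh t) eta)).
  have HFe : forall eta, ex_RInt (Fe eta) a b /\ RInt (Fe eta) a b = fst (A eta).
    move=> eta. have := HA eta. simpl. move=> [[pr Hpr] _].
    have E : (fun t => fst (L t (fun i => Cadd (x t i) (Cmul (RtoC eta) (h t i)))
                 (Box a b eps N c (fun t i => Cadd (x t i) (Cmul (RtoC eta) (h t i))) t))) = Fe eta.
      apply functional_extensionality => t. by rewrite /Fe Box_lin.
    have H1 := ex_RInt_Reals_1 _ _ _ pr. have H2 := RInt_Reals _ _ _ pr.
    rewrite Hpr E in H2. rewrite E in H1. by split.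
  pose phl l t := phi del (cl l) t.
  pose ga l := al l - ep * M l.
  pose G t := be * phi del t0 t + sumZR N (fun l => ga l * phl l t).
  have Hins0 : ins 0%Z by rewrite /ins Ecl0; lra.
  have Hal0 : forall l, (- Z.of_nat N <= l <= Z.of_nat N)%Z -> ~ ins l ->
      al l = 0 /\ chi a b eps l t0 = C0.
    move=> l Hl Hi. case: (chi_cases a b eps l t0) => Hc.
    - split => //. rewrite /al Hc /=. ring.
    - exfalso. apply Hi. exact: (far_ins Hr Hfar Hl Hc).
  have Hphc : forall l t, continuous (phl l) t by move=> l t; apply phi_cont.
  have HGc : forall t, continuous G t.
    move=> t. apply: (continuous_plus (fun t => be * phi del t0 t)).
    - apply: (continuous_mult (fun _ => be)). apply continuous_const. apply phi_cont.
    - apply: (sR_cont (idx N) (fun k t => ga (zk N k) * phl (zk N k) t)) => k.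
      apply: (continuous_mult (fun _ => ga (zk N k))). apply continuous_const. apply phi_cont.
  set I := Itent del.
  have HIp : 0 < I by apply Itent_pos.
  have HIl : forall l, (- Z.of_nat N <= l <= Z.of_nat N)%Z -> ins l -> RInt (phl l) a b = I.
    move=> l Hl Hi. have [H1 H2] := Hfar l ltac:(lia). rewrite /ins /cl in Hi.
    apply tent_full => //; move: H1 H2; rewrite /cl; unfold Rabs; repeat case: Rcase_abs => ?; lra.
  have HIl0 : forall l, (- Z.of_nat N <= l <= Z.of_nat N)%Z -> ~ ins l -> RInt (phl l) a b = 0.
    move=> l Hl Hi. have [H1 H2] := Hfar l ltac:(lia). rewrite /ins /cl in Hi.
    apply RInt_zero_fun. lra. move=> t Ht. apply phi_out. rewrite /cl.
    move: H1 H2. unfold Rabs; repeat case: Rcase_abs => ?; lra.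
  have HI0 : RInt (phi del t0) a b = I by apply tent_full; lra.
  have HIG : RInt G a b = be * I + sumZR N (fun l => ga l * RInt (phl l) a b).
    have Hc1 : forall k t, continuous (fun t => ga (zk N k) * phl (zk N k) t) t.
      move=> k t. apply: (continuous_mult (fun _ => ga (zk N k))). apply continuous_const. apply phi_cont.
    have E1 : RInt G a b = RInt (fun t => be * phi del t0 t) a b +
                           RInt (fun t => sumZR N (fun l => ga l * phl l t)) a b.
      apply: (RInt_plus (fun t => be * phi del t0 t) (fun t => sumZR N (fun l => ga l * phl l t))).
      - apply ex_RInt_cont => t. apply: (continuous_mult (fun _ => be)). apply continuous_const. apply phi_cont.
      - apply ex_RInt_cont => t. by apply: (sR_cont (idx N) (fun k t => ga (zk N k) * phl (zk N k) t)).
    rewrite E1.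
    have -> : RInt (fun t => be * phi del t0 t) a b = be * RInt (phi del t0) a b.
      apply: (RInt_scal (phi del t0) a b be). apply ex_RInt_cont, phi_cont.
    rewrite HI0. f_equal.
    rewrite /sumZR. rewrite (RInt_sR (idx N) (fun k t => ga (zk N k) * phl (zk N k) t)) //.
    apply sR_ext => k _. apply: (RInt_scal (phl (zk N k)) a b). apply ex_RInt_cont, phi_cont.
  have HIGp : I * (Q - ep * SM) <= RInt G a b.
    rewrite HIG HQ2.
    have : I * sumZR N ga <= sumZR N (fun l => ga l * RInt (phl l) a b).
      rewrite -sumZR_scal. apply sumZR_le => l Hl.
      destruct (classic (ins l)) as [Hi|Hi].
      - rewrite HIl //. lra.
      - rewrite HIl0 // /ga (proj1 (Hal0 l Hl Hi)). have := Rmult_le_pos _ _ (Rlt_le _ _ Hep) (HM l). nra.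
    have -> : sumZR N ga = sumZR N al - ep * SM.
      rewrite /SM -sumZR_scal. have <- : sumZR N (fun l => al l + - (ep * M l)) = sumZR N al - sumZR N (fun l => ep * M l).
        rewrite sumZR_add. have -> : sumZR N (fun l => - (ep * M l)) = - 1 * sumZR N (fun l => ep * M l).
          rewrite -sumZR_scal. apply sumZR_ext => l _. ring.
        ring.
      apply sumZR_ext => l _. rewrite /ga. ring.
    nra.
  have HepSM : ep * SM <= Q / 4.
    rewrite /ep. apply (Rmult_le_reg_r (4 * (SM + 1))). lra.
    have -> : Q / (4 * (SM + 1)) * SM * (4 * (SM + 1)) = Q * SM by field; lra. nra.
  have HIGpos : 0 < RInt G a b by nra.
  set eta0 := (rho / (6 * D1)) / ((1 + SC) * (Cmod w * del) + 1).
  have HX0 : 0 <= (1 + SC) * (Cmod w * del) by apply Rmult_le_pos; [lra | nra].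
  have Hrd : 0 < rho / (6 * D1) by apply Rdiv_lt_0_compat; lra.
  have Heta0 : 0 < eta0 by apply Rdiv_lt_0_compat; lra.
  have Heta0b : forall th, 0 <= th <= eta0 -> th * ((1 + SC) * (Cmod w * del)) <= rho / (6 * D1).
    move=> th Hth. apply Rle_trans with (eta0 * ((1 + SC) * (Cmod w * del) + 1)).
    nra. apply Req_le. rewrite /eta0. field. lra.
  have KP : forall eta, 0 < eta < eta0 -> forall t, a < t < b -> eta * G t <= Fe eta t - Fe 0 t.
    move=> eta Heta t Ht.
    have Hsh : forall l, phi del t0 (t + IZR l * eps) = phl l t.
      move=> l. by rewrite phi_shift.
    have Hphl0 : forall l, 0 <= phl l t by move=> l; apply phi_ge0.
    destruct (classic (exists l, (- Z.of_nat N <= l <= Z.of_nat N)%Z /\ Rabs (t - cl l) < del))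
      as [[l [Hl Htl]]|Hn].
    2: {
      have Hz : forall l, (- Z.of_nat N <= l <= Z.of_nat N)%Z -> phl l t = 0.
        move=> l Hl. apply phi_out. apply Rnot_lt_le => H. apply Hn. by exists l.
      have Hp0 : phi del t0 t = 0.
        have := Hz 0%Z ltac:(lia). by rewrite /phl Ecl0.
      have Hht : forall i, h t i = C0.
        move=> i. rewrite /h. case: (i == j) => //. rewrite Hp0. cring.
      have HBt : forall i, Bh t i = C0.
        move=> i. rewrite /Bh /Box. apply sumZ_zero => l Hl.
        rewrite /h. case: (i == j). rewrite Hsh Hz //. cring. cring.
      rewrite /Fe !Yv_zero //.
      have -> : G t = 0.
        rewrite /G Hp0. rewrite (sumZR_ext N _ (fun l => 0 * 1)).
        rewrite sumZR_scal. ring. move=> l Hl. rewrite Hz //. ring.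
      lra. }
    have Hz : forall l', (- Z.of_nat N <= l' <= Z.of_nat N)%Z -> l' <> l -> phl l' t = 0.
      move=> l' Hl' Hne. apply phi_out.
      have Hk : 1 <= Rabs (IZR (l' - l)) by apply IZR_ne_ge1; lia.
      have E : cl l - cl l' = IZR (l' - l) * eps by rewrite /cl minus_IZR; ring.
      have T := Rabs_triang_inv (cl l - cl l') (cl l - t).
      replace (cl l - cl l' - (cl l - t)) with (t - cl l') in T by ring.
      rewrite (Rabs_minus_sym (cl l) t) E Rabs_mult (Rabs_right eps) in T; last lra.
      have : eps <= Rabs (IZR (l' - l)) * eps by nra. lra.
    have Hchil : chi a b eps (- l) t = chi a b eps l t0.
      rewrite chi_neg. apply: (far_chi_const Hfar Hl).
      replace (t + IZR l * eps - t0) with (t - cl l) by (rewrite /cl; ring). lra.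
    have HBtj : Bh t j = Cmul (c l) (Cmul (Cmul w (RtoC (phl l t))) (chi a b eps l t0)).
      rewrite /Bh /Box (sumZ_single N _ l Hl).
      - by rewrite Hhj Hsh Hchil.
      - move=> l' Hl' Hne. rewrite Hhj Hsh Hz //. cring.
    have Hphi0 : l <> 0%Z -> phi del t0 t = 0.
      move=> Hl0. have := Hz 0%Z ltac:(lia) ltac:(lia). by rewrite /phl Ecl0.
    have HG : G t = be * phi del t0 t + ga l * phl l t.
      rewrite /G (sumZR_single N _ l Hl) //. move=> l' Hl' Hne. rewrite Hz //. ring.
    case: (chi_cases a b eps l t0) => Hc.
    - have Hl0 : l <> 0%Z.
        move=> E; subst l. rewrite chi_in in Hc. rewrite /C1 /C0 in Hc. injection Hc. lra.
        rewrite /inchi Rmult_0_l Rplus_0_r Rplus_0_r. lra.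
      have Hht : forall i, h t i = C0.
        move=> i. rewrite /h. case: (i == j) => //. rewrite Hphi0 //. cring.
      have HBt : forall i, Bh t i = C0.
        move=> i. case: (eqVneq i j) => [->|Hij]. rewrite HBtj Hc. cring. by apply HB0; apply/eqP.
      rewrite /Fe !Yv_zero // HG Hphi0 //.
      have Hal : al l = 0 by rewrite /al Hc /=; ring.
      rewrite /ga Hal. have := Hphl0 l. have := Rmult_le_pos _ _ (Rlt_le _ _ Hep) (HM l).
      have := Rmult_le_pos _ _ (Rlt_le _ _ (proj1 Heta)) (Hphl0 l). nra.
    - have Hi : ins l := far_ins Hr Hfar Hl Hc.
      have Htab : a <= t <= b by lra.
      have [th [Hth HF]] := Lmvt j (X := x t) (V := BX t) HL Htab (Hh0 t) (HB0 t) (proj1 Heta).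
      rewrite /Fe Yv0 Yv0 HF.
      set P1 := Yv (x t) (h t) th. set P2 := Yv (BX t) (Bh t) th.
      have Htcl : Rabs (t - cl l) < sig by lra.
      have Hthb := Heta0b th ltac:(lra).
      have HVb : forall (X Y : Cvec d) (Z : Cvec d) (B : R), (forall i, Cmod (Csub (X i) (Z i)) < rho / (6 * D1)) ->
          (forall i, Cmod (Y i) <= B) -> th * B <= rho / (6 * D1) ->
          Vnorm (Vsub (Yv X Y th) Z) <= rho / 3.
        move=> X Y Z B H1 H2 H3.
        apply Rle_trans with (INR d * (2 * (rho / (6 * D1)))).
        + apply Vnorm_bound => i. rewrite /Vsub /Yv.
          replace (Csub (Cadd (X i) (Cmul (RtoC th) (Y i))) (Z i)) with
            (Cadd (Csub (X i) (Z i)) (Cmul (RtoC th) (Y i))) by cring.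
          apply Rle_trans with (1 := Cmod_add_le _ _). rewrite Cmod_mul Cmod_RtoC Rabs_right; last lra.
          have := H1 i. have := H2 i. have := Cmod_ge0 (Y i). nra.
        + have -> : INR d * (2 * (rho / (6 * D1))) = rho / 3 * (INR d / D1) by field; lra.
          have : INR d / D1 <= 1. apply (Rmult_le_reg_r D1) => //. rewrite /Rdiv Rmult_assoc Rinv_l; [rewrite /D1; lra | lra].
          nra.
      have HV1 : Vnorm (Vsub P1 (x (cl l))) <= rho / 3.
        apply (HVb _ _ _ (Cmod w * del)).
        + move=> i. exact: (proj1 (Hsigp l Hl Hi t Htab Htcl i)).
        + apply Hhb.
        + have := Rmult_le_pos _ _ HSC (Rmult_le_pos _ _ Hw0 (Rlt_le _ _ Hdel)). nra.
      have HV2 : Vnorm (Vsub P2 (BX (cl l))) <= rho / 3.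
        apply (HVb _ _ _ (SC * (Cmod w * del))).
        + move=> i. exact: (proj2 (Hsigp l Hl Hi t Htab Htcl i)).
        + apply HBb.
        + have := Rmult_le_pos _ _ (Rmult_le_pos _ _ Hw0 (Rlt_le _ _ Hdel)). nra.
      have Hclose : Rabs (t - cl l) + Vnorm (Vsub P1 (x (cl l))) + Vnorm (Vsub P2 (BX (cl l))) < rho by lra.
      have [HJx HJv] := Hrhoj l Hl Hi t P1 P2 Htab Hclose.
      set Hv := h t j. set Kv := Bh t j.
      set LxP := Lx j t P1 P2. set LvP := Lv j t P1 P2.
      have HJx' : Cmod (Csub LxP (LXc l)) < ep := HJx.
      have HJv' : Cmod (Csub LvP (LVc l)) < ep := HJv.
      set Dc := Cadd (Cmul (LXc l) Hv) (Cmul (LVc l) Kv).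
      have Hdf : Cmod (Csub (Cadd (Cmul LxP Hv) (Cmul LvP Kv)) Dc) <= ep * (Cmod Hv + Cmod Kv).
        replace (Csub (Cadd (Cmul LxP Hv) (Cmul LvP Kv)) Dc) with
          (Cadd (Cmul (Csub LxP (LXc l)) Hv) (Cmul (Csub LvP (LVc l)) Kv)) by (rewrite /Dc; cring).
        apply Rle_trans with (1 := Cmod_add_le _ _). rewrite !Cmod_mul.
        have := Cmod_ge0 Hv. have := Cmod_ge0 Kv. nra.
      have Hfs := Rabs_fst_le (Csub (Cadd (Cmul LxP Hv) (Cmul LvP Kv)) Dc).
      have Efs : fst (Csub (Cadd (Cmul LxP Hv) (Cmul LvP Kv)) Dc) =
                 fst (Cadd (Cmul LxP Hv) (Cmul LvP Kv)) - fst Dc by simpl; ring.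
      rewrite Efs in Hfs.
      have HHK : Cmod Hv + Cmod Kv <= M l * phl l t.
        have EK : Cmod Kv = Cmod (c l) * (Cmod w * phl l t).
          rewrite /Kv HBtj Hc !Cmod_mul Cmod_RtoC Rabs_right. rewrite /Cmod /C1 /=.
          replace (1 * 1 + 0 * 0) with 1 by ring. rewrite sqrt_1. ring. apply Rle_ge, Hphl0.
        have EH : Cmod Hv <= Cmod w * phl l t.
          rewrite /Hv Hhj Cmod_mul Cmod_RtoC. destruct (Z.eq_dec l 0) as [E|Ne].
          - subst l. rewrite /phl Ecl0 Rabs_right. lra. apply Rle_ge, phi_ge0.
          - rewrite Hphi0 // Rabs_R0. have := Hphl0 l. nra.
        rewrite /M. have := Cmod_ge0 (c l). lra.
      have HDc : fst Dc = be * phi del t0 t + al l * phl l t.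
        rewrite /Dc /Kv /Hv HBtj Hhj /al /be.
        destruct (Z.eq_dec l 0) as [E|Ne].
        - subst l. simpl. ring.
        - rewrite Hphi0 //. simpl. ring.
      rewrite HG /ga.
      have : ep * (Cmod Hv + Cmod Kv) <= ep * (M l * phl l t) by apply Rmult_le_compat_l; lra.
      have : - Rabs (fst (Cadd (Cmul LxP Hv) (Cmul LvP Kv)) - fst Dc) <= fst (Cadd (Cmul LxP Hv) (Cmul LvP Kv)) - fst Dc.
        have := Rle_abs (- (fst (Cadd (Cmul LxP Hv) (Cmul LvP Kv)) - fst Dc)). rewrite Rabs_Ropp. lra.
      move=> *. have Hfin : be * phi del t0 t + (al l - ep * M l) * phl l t <= fst (Cadd (Cmul LxP Hv) (Cmul LvP Kv)).
        lra.
      have := proj1 Heta. nra.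
  have [dA HdA] := HA1 (RInt G a b / 2) ltac:(lra).
  have HdA0 := cond_pos dA.
  set eta := Rmin (eta0 / 2) (dA / 2).
  have He1 : eta <= eta0 / 2 by apply Rmin_l.
  have He2 : eta <= dA / 2 by apply Rmin_r.
  have He3 : 0 < eta by apply Rmin_pos; lra.
  have Hq := HdA eta ltac:(lra) ltac:(rewrite Rabs_right; lra).
  rewrite Rplus_0_l Rminus_0_r in Hq.
  have [Ex1 R1] := HFe eta. have [Ex0 R0] := HFe 0.
  have Hdiff : eta * RInt G a b <= fst (A eta) - fst (A 0).
    rewrite -R1 -R0.
    have -> : RInt (Fe eta) a b - RInt (Fe 0) a b = RInt (fun t => Fe eta t - Fe 0 t) a b.
      symmetry. by apply: (RInt_minus (Fe eta) (Fe 0)).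
    have -> : eta * RInt G a b = RInt (fun t => eta * G t) a b.
      symmetry. apply: (RInt_scal G a b eta). by apply ex_RInt_cont.
    apply RInt_le. lra.
    - apply: (ex_RInt_scal G a b eta). by apply ex_RInt_cont.
    - by apply: (ex_RInt_minus (Fe eta) (Fe 0)).
    - move=> t Ht. apply KP => //. lra.
  have : RInt G a b <= (fst (A eta) - fst (A 0)) / eta.
    apply (Rmult_le_reg_r eta) => //. rewrite /Rdiv Rmult_assoc Rinv_l; lra.
  move: Hq. unfold Rabs. case: Rcase_abs => ? ?; lra.
Qed.


Lemma geom_sum e n : sum_f_R0 (fun k => e / pow 2 (S k)) n = e - e / pow 2 (S n).
Proof.
  elim: n => [|n IH].
  - rewrite /sum_f_R0 /pow. replace (2 * 1) with 2 by ring. field.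
  - rewrite tech5 IH. have H := pow_lt 2 n ltac:(lra).
    have E1 : pow 2 (S n) = 2 * pow 2 n by [].
    have E2 : pow 2 (S (S n)) = 2 * (2 * pow 2 n) by [].
    rewrite E2 E1. field. lra.
Qed.

Lemma neg_finite (N : nat) (p q : Z -> R) (Sx : R -> Prop) :
  (forall t, Sx t -> exists k, (- Z.of_nat N <= k <= Z.of_nat N)%Z /\ (t = p k \/ t = q k)) ->
  negligible Sx.
Proof.
  move=> HS e He.
  pose K := (2 * N).+1.
  pose P n := if (n < K)%N then p (zk N n) else q (zk N (n - K)).
  exists (fun n => P n - e / pow 2 (S (S n))), (fun n => P n + e / pow 2 (S (S n))).
  have Hw : forall n, 0 < e / pow 2 (S (S n)). move=> n. apply Rdiv_lt_0_compat => //. apply pow_lt. lra.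
  split; [|split].
  - move=> n. have := Hw n. lra.
  - move=> t Ht. have [k [Hk [E|E]]] := HS t Ht.
    + exists (Z.to_nat (k + Z.of_nat N)). rewrite /P.
      have -> : (Z.to_nat (k + Z.of_nat N) < K)%N by rewrite /K; lia.
      have -> : zk N (Z.to_nat (k + Z.of_nat N)) = k by rewrite /zk; lia.
      have := Hw (Z.to_nat (k + Z.of_nat N)). lra.
    + exists (K + Z.to_nat (k + Z.of_nat N))%N. rewrite /P.
      have -> : (K + Z.to_nat (k + Z.of_nat N) < K)%N = false by lia.
      have -> : zk N (K + Z.to_nat (k + Z.of_nat N) - K) = k by rewrite /zk; lia.
      have := Hw (K + Z.to_nat (k + Z.of_nat N))%N. lra.
  - move=> n.
    have -> : sum_f_R0 (fun k => P k + e / pow 2 (S (S k)) - (P k - e / pow 2 (S (S k)))) n =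
              sum_f_R0 (fun k => e / pow 2 (S k)) n.
      apply Stdlib.Reals.PartSum.sum_eq => i _. have E1 : pow 2 (S (S i)) = 2 * pow 2 (S i) by []. rewrite E1. field. have := pow_lt 2 (S i) ltac:(lra). lra.
    rewrite geom_sum. have := pow_lt 2 (S n) ltac:(lra). move=> H.
    have : 0 < e / pow 2 (S n) by apply Rdiv_lt_0_compat. lra.
Qed.

Theorem mainTheorem2
  (a b eps : R) (N d : nat) (c : Z -> Cx) (alpha beta : Cvec d)
  (L : R -> Cvec d -> Cvec d -> Cx)
  (Lx Lv : 'I_d -> R -> Cvec d -> Cvec d -> Cx)
  (x : R -> Cvec d) :
  a < b -> 0 < eps -> (1 <= N)%nat -> (1 <= d)%nat ->
  jointly_continuous a b L ->
  complex_partials a b L Lx Lv ->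
  (forall j, jointly_continuous a b (Lx j)) ->
  (forall j, jointly_continuous a b (Lv j)) ->
  Cpw a b eps alpha beta x ->
  (* x is a critical point of the discrete action *)
  (forall h : R -> Cvec d,
     Cpw a b eps (fun _ => C0) (fun _ => C0) h ->
     exists A : R -> Cx,
       (forall eta : R,
          let y := fun t j => Cadd (x t j) (Cmul (RtoC eta) (h t j)) in
          is_RInt_C (fun t => L t (y t) (Box a b eps N c y t)) a b (A eta)) /\
       derivable_pt_lim (fun eta => fst (A eta)) 0 0 /\
       derivable_pt_lim (fun eta => snd (A eta)) 0 0) ->
  forall j : 'I_d,
    negligible (fun t => a <= t <= b /\
      Cadd (Box_minus a b eps N c
              (fun s => Lv j s (x s) (Box a b eps N c x s)) t)
           (Lx j t (x t) (Box a b eps N c x t)) <> C0).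
Proof.
  move=> Hab He HN Hd HLc HL HLx HLv Hx Hcrit j.
  apply (neg_finite (2 * N) (fun k => a + IZR k * eps) (fun k => b + IZR k * eps)).
  move=> t [Ht HE].
  apply NNPP => Hn. apply HE.
  have [r [Hr Hf]] : exists r, 0 < r /\ far N a b eps r t.
    apply (@exists_min_Z (2 * N) (fun k r => r <= Rabs (t - (a + IZR k * eps)) /\ r <= Rabs (t - (b + IZR k * eps)))).
    - move=> k rr rr' Hrr [H1 H2]. split; lra.
    - move=> k Hk. exists (Rmin (Rabs (t - (a + IZR k * eps))) (Rabs (t - (b + IZR k * eps)))).
      split. apply Rmin_pos; apply Rabs_pos_lt => E; apply Hn; exists k; split => //.
      left; lra. right; lra.
      split. apply Rmin_l. apply Rmin_r.
  exact: (@core a b eps N d c alpha beta L Lx Lv x j r t Hab He HL HLx HLv Hx Hcrit Hr Hf Ht).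
Qed.
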